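(* For every intersection lattice $L$, there exists a tight intersection lattice $L'$ that is isomorphic (as a poset) to $L$.
   Context: A finite family $\mathcal{F}$ of sets is non-trivial if it is non-empty and no $X\in\mathcal{F}$ satisfies $X=\bigcup\mathcal{F}$. For such $\mathcal{F}$ and non-empty $\mathcal{T}\subseteq\mathcal{F}$, let $S_{\mathcal{T}}=\bigcap\mathcal{T}$, and let $S_\emptyset=\bigcup\mathcal{F}$. The intersection lattice of $\mathcal{F}$ is the poset $\mathbb{L}_{\mathcal{F}}=(\{S_{\mathcal{T}}\mid \mathcal{T}\subseteq\mathcal{F}\},\subseteq)$; its greatest element is $\hat 1=\bigcup\mathcal{F}$. A lattice is an intersection lattice if it equals $\mathbb{L}_{\mathcal{F}}$ for some non-trivial finite family $\mathcal{F}$. For $L=\mathbb{L}_{\mathcal{F}}$ and $x\in\hat 1$, let $\min_L(x)=S_{\{X\in\mathcal{F}\mid x\in X\}}$. The intersection lattice $L$ is tight if for every $U\in L$ with $U\neq\hat 1$ there is exactly one $x\in\hat 1$ with $\min_L(x)=U$. *)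

(* Defs.v *)
From mathcomp Require Import all_boot.
From mathcomp Require Import boolp classical_sets.
Set Implicit Arguments. Unset Strict Implicit. Unset Printing Implicit Defensive.
Local Open Scope classical_set_scope.

Section IntersectionLattice.
Variables (T : Type) (n : nat).

(* A finite family of sets over T, indexed by 'I_n (repetitions allowed). *)
Definition fam_union (F : 'I_n -> set T) : set T := \bigcup_i F i.

Definition nontrivial_fam (F : 'I_n -> set T) : Prop :=
  (0 < n)%N /\ forall i, F i <> fam_union F.

Definition S_sub (F : 'I_n -> set T) (I : {set 'I_n}) : set T :=
  if I == finset.set0 then fam_union F else [set x | forall i, i \in I -> F i x].

Definition int_lattice (F : 'I_n -> set T) : set (set T) := range (S_sub F).

Definition minL (F : 'I_n -> set T) (x : T) : set T :=
  S_sub F (finset.finset (fun i => `[< F i x >])).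

Definition tight (F : 'I_n -> set T) : Prop :=
  forall U, int_lattice F U -> U <> fam_union F ->
    exists! x, fam_union F x /\ minL F x = U.

End IntersectionLattice.

Definition poset_iso (T T' : Type) (L : set (set T)) (L' : set (set T')) : Prop :=
  exists f : set T -> set T',
    (forall U, L U -> L' (f U)) /\
    (forall V, L' V -> exists2 U, L U & f U = V) /\
    (forall U V, L U -> L V -> (U `<=` V <-> f U `<=` f V)).

(* Main.v *)
Require Import Defs.
From mathcomp Require Import all_boot.
From mathcomp Require Import boolp classical_sets.
Set Implicit Arguments. Unset Strict Implicit. Unset Printing Implicit Defensive.
Local Open Scope classical_set_scope.

Section Aux.
Variables (T : Type) (n : nat) (F : 'I_n -> set T).
Hypothesis ntF : nontrivial_fam F.

Local Notation top := (fam_union F).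
Local Notation L := (int_lattice F).
Definition phi (U : set T) : set (set T) := [set V | L V /\ V <> top /\ V `<=` U].
Definition Fp (i : 'I_n) : set (set T) := phi (F i).

Lemma S_sub0 (I : {set 'I_n}) : I = finset.set0 -> S_sub F I = top.
Proof. by move=> ->; rewrite /S_sub eqxx. Qed.

Lemma S_subN (A : Type) (G : 'I_n -> set A) (I : {set 'I_n}) : I != finset.set0 ->
  S_sub G I = [set x | forall i, i \in I -> G i x].
Proof. by move=> H; rewrite /S_sub (negbTE H). Qed.

Lemma L_sub_top U : L U -> U `<=` top.
Proof.
case=> I _ <-; case: (eqVneq I finset.set0) => [->|H]; first by rewrite S_sub0.
rewrite S_subN //; have/finset.set0Pn [i Hi] := H.
by move=> x /= /(_ i Hi) Fx; exists i.
Qed.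

Lemma L_top : L top.
Proof. by exists finset.set0 => //; rewrite S_sub0. Qed.

Lemma L_Fi i : L (F i).
Proof.
exists (finset.set1 i) => //; rewrite S_subN; last first.
  by apply/finset.set0Pn; exists i; rewrite finset.in_set1.
apply/seteqP; split => x /=; first by apply; rewrite finset.in_set1.
by move=> Fx j; rewrite finset.in_set1 => /eqP ->.
Qed.

Lemma L_repr V : L V -> V <> top ->
  exists2 I : {set 'I_n}, I != finset.set0 & V = [set x | forall i, i \in I -> F i x].
Proof.
case=> I _ <- Hne; case: (eqVneq I finset.set0) => [E|H].
  by exfalso; apply: Hne; rewrite S_sub0.
by exists I => //; rewrite S_subN.
Qed.

Lemma phi_mono U W : L U -> L W -> (U `<=` W <-> phi U `<=` phi W).
Proof.
move=> LU LW; split.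
  by move=> UW V [LV [Vt VU]]; split => //; split => //; apply: subset_trans UW.
move=> H; case: (pselect (U = top)) => [Ut|Unt]; last first.
  by have [_ [_]] := H U (conj LU (conj Unt (@subset_refl _ U))).
rewrite Ut => x [i _ Fix].
have := H (F i); case.
  split; first exact: L_Fi.
  split; first by case: ntF.
  by rewrite Ut; apply: L_sub_top; apply: L_Fi.
by move=> _ [_ /(_ x Fix)].
Qed.

Lemma phi_inj U W : L U -> L W -> phi U = phi W -> U = W.
Proof.
move=> LU LW E; apply/seteqP; split.
  by apply/(phi_mono LU LW); rewrite E.
by apply/(phi_mono LW LU); rewrite E.
Qed.

Lemma union_Fp : fam_union Fp = phi top.
Proof.
apply/seteqP; split.
  move=> V [i _ [LV [Vt VF]]]; split => //; split => //.
  by apply: subset_trans VF _ => x Fx; exists i.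
move=> V [LV [Vt _]].
have [I /finset.set0Pn [i Hi] EV] := L_repr LV Vt.
exists i => //; split => //; split => //.
by rewrite EV => x /= /(_ i Hi).
Qed.

Lemma S_sub_Fp J : S_sub Fp J = phi (S_sub F J).
Proof.
case: (eqVneq J finset.set0) => [E|H].
  by rewrite (S_sub0 E) /S_sub E eqxx union_Fp.
rewrite !S_subN //; have/finset.set0Pn [j Hj] := H.
apply/seteqP; split.
  move=> V /= HV; have [LV [Vt _]] := HV j Hj; split => //; split => //.
  by move=> x Vx i Hi; have [_ [_]] := HV i Hi; apply.
move=> V [LV [Vt VS]] i Hi; split => //; split => //.
by move=> x /VS /(_ i Hi).
Qed.

Lemma L'_iff V : int_lattice Fp V <-> exists2 U, L U & phi U = V.
Proof.
split.
  by case=> J _ <-; exists (S_sub F J); [exists J | rewrite S_sub_Fp].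
by case=> U [I _ <-] <-; exists I => //; rewrite S_sub_Fp.
Qed.

Lemma minL_Fp V : L V -> V <> top -> minL Fp V = phi V.
Proof.
move=> LV Vt; rewrite /minL S_sub_Fp; congr phi.
have [I I0 EV] := L_repr LV Vt.
have/finset.set0Pn [i Hi] := I0.
have Hsub : forall j, j \in I -> V `<=` F j by move=> j Hj x; rewrite EV => /(_ j Hj).
have Ji : i \in finset.finset (fun j => `[< Fp j V >]).
  by rewrite finset.in_set; apply/asboolP; split => //; split => //; apply: Hsub.
rewrite S_subN; last by apply/finset.set0Pn; exists i.
apply/seteqP; split.
  move=> x /= Hx; rewrite EV => j Hj; apply: Hx.
  by rewrite finset.in_set; apply/asboolP; split => //; split => //; apply: Hsub.
move=> x Vx j; rewrite finset.in_set => /asboolP [_ [_ VF]]; exact: VF.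
Qed.

End Aux.

Theorem lemma4p3 (T : Type) (n : nat) (F : 'I_n -> set T) :
  nontrivial_fam F ->
  exists (T' : Type) (n' : nat) (F' : 'I_n' -> set T'),
    nontrivial_fam F' /\ tight F' /\ poset_iso (int_lattice F) (int_lattice F').
Proof.
move=> ntF; exists (set T), n, (Fp F); split; [|split].
- split; first by case: ntF.
  move=> i; rewrite union_Fp => E.
  have [_ nt] := ntF; apply: (nt i).
  exact: (phi_inj ntF (L_Fi F i) (L_top F) E).
- move=> U /L'_iff [W LW <-]; rewrite union_Fp => Wne.
  have Wt : W <> fam_union F by move=> E; apply: Wne; rewrite E.
  exists W; split.
    split; first by split => //; split => //; apply: L_sub_top.
    exact: minL_Fp.
  move=> x [[Lx [xt _]]].
  rewrite minL_Fp // => E; symmetry; exact: (phi_inj ntF Lx LW E).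
- exists (phi F); split; [|split].
  + by move=> U LU; apply/L'_iff; exists U.
  + by move=> V /L'_iff.
  + by move=> U V LU LV; apply: phi_mono.
Qed.
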